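(* Let $D=\mathrm{diag}(1,-1,1,-1,\ldots)=(1,-x)$, $\mathbb{F}^{\rm S}=(1,x(1+x))$, $\mathbb{L}^{\rm S}=(1+2x,x(1+x))$, write $D(\mathbb{F}^{\rm S})^{-1}D=[r_{nj}]_{n,j\ge0}$ and $D(\mathbb{L}^{\rm S})^{-1}D=[q_{nj}]_{n,j\ge0}$, let $C_m=\frac{1}{m+1}\binom{2m}{m}$ be the Catalan numbers, and use the convention $\binom{a}{-1}=0$. Then: (a) The $0$-th column of $D(\mathbb{F}^{\rm S})^{-1}D$ is $[C_0,0,0,\ldots]^T$; and for $j\ge1$, $$r_{nj}=\begin{cases}\displaystyle\sum_{k=0}^{\lfloor (j-1)/2\rfloor}(-1)^k\binom{j-1-k}{k}C_{n-1-k}, & n\ge j,\\ 0,&\text{otherwise},\end{cases}$$ i.e. $r_{nj}=\binom{j-1}{0}C_{n-1}-\binom{j-2}{1}C_{n-2}+\cdots+(-1)^{\lfloor (j-1)/2\rfloor}\binom{\lceil (j-1)/2\rceil}{\lfloor (j-1)/2\rfloor}C_{n-\lceil j/2\rceil}$ for $n\ge j$. (b) The $0$-th column of $D(\mathbb{L}^{\rm S})^{-1}D$ is $[C_0,2C_1,3C_2,\ldots]^T$ (i.e. $q_{n0}=(n+1)C_n$); for $n\ge1$, $q_{n1}=(2n-1)C_{n-1}$; and for $j\ge2$ and $n\ge j$, $$q_{nj}=\sum_{k=0}^{\lfloor (j-1)/2\rfloor}(-1)^k\left[(n-1-k)\left(\binom{j-1-k}{k}+\binom{j-2-k}{k-1}\right)+\binom{j-2-k}{k-1}\right]C_{n-1-k},$$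 i.e. $q_{nj}=(n-1)C_{n-1}-\left[(n-2)\left(\binom{j-2}{1}+\binom{j-3}{0}\right)+\binom{j-3}{0}\right]C_{n-2}+\left[(n-3)\left(\binom{j-3}{2}+\binom{j-4}{1}\right)+\binom{j-4}{1}\right]C_{n-3}+\cdots+(-1)^{\lfloor (j-1)/2\rfloor}\left[\left(n-\lceil j/2\rceil\right)\left(\binom{\lceil (j-1)/2\rceil}{\lfloor (j-1)/2\rfloor}+\binom{\lceil (j-1)/2\rceil-1}{\lfloor (j-1)/2\rfloor-1}\right)+\binom{\lceil (j-3)/2\rceil}{\lfloor (j-3)/2\rfloor}\right]C_{n-\lceil j/2\rceil}$.
   Context: All matrices are infinite with rows and columns indexed by $0,1,2,\ldots$. For formal power series $g(x)=g_0+g_1x+\cdots$ with $g_0\ne0$ and $f(x)=f_1x+f_2x^2+\cdots$ with $f_1\ne0$, $(g(x),f(x))$ denotes the (Riordan) infinite lower triangular matrix whose $j$-th column has generating function $g(x)f(x)^j$. These matrices form a group under matrix multiplication with $(g,f)(h,l)=(g\cdot h(f),l(f))$. *)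

(* Defs.v *)
From mathcomp Require Import all_boot all_order all_algebra.
Set Implicit Arguments. Unset Strict Implicit. Unset Printing Implicit Defensive.
Import Order.TTheory GRing.Theory Num.Theory.
Local Open Scope ring_scope.

Definition imat := nat -> nat -> int.

Definition lower_tri (A : imat) : Prop := forall n j, (n < j)%N -> A n j = 0.

(* Product of infinite matrices; exact (finite sum) when A is lower triangular,
   since then A n k = 0 for k > n. *)
Definition imat_mul (A B : imat) : imat :=
  fun n j => \sum_(k < n.+1) A n k * B k j.

Definition imat_id : imat := fun n j => (n == j)%:R.

(* The Riordan array (g(x), f(x)): column j has generating function g f^j.
   Here g, f are polynomials (all series in the statement are polynomials). *)
Definition riordan (g f : {poly int}) : imat :=
  fun n j => (g * f ^+ j)`_n.

Definition D_mat : imat := riordan 1 (- 'X).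
Definition FS : imat := riordan 1 ('X * (1 + 'X)).
Definition LS : imat := riordan (1 + 2%:R *: 'X) ('X * (1 + 'X)).

Definition catalan (m : nat) : int := ('C(m.*2, m) %/ m.+1)%:Z.

(* binom(a, k-1) with the convention binom(a, -1) = 0. *)
Definition binom_pred (a k : nat) : nat :=
  if k is k'.+1 then 'C(a, k') else 0%N.

(* Main.v *)
Require Import Defs.
From mathcomp Require Import all_boot all_order all_algebra.
From mathcomp Require Import zify ring.
Import Order.TTheory GRing.Theory Num.Theory.
Local Open Scope ring_scope.

Lemma sum_delta (N j : nat) (F : nat -> int) :
  \sum_(k < N) F k * (nat_of_ord k == j)%:R = if (j < N)%N then F j else 0.
Proof.
case: ltnP => h.
  rewrite (bigD1 (Ordinal h)) //= eqxx mulr1 big1 ?addr0 // => i hi.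
  suff -> : (nat_of_ord i == j) = false by rewrite mulr0.
  apply: contraNF hi => /eqP e; apply/eqP/val_inj => /=; exact: e.
rewrite big1 // => i _.
suff -> : (nat_of_ord i == j) = false by rewrite mulr0.
apply/negbTE; rewrite neq_ltn; apply/orP; left; exact: (leq_trans (ltn_ord i) h).
Qed.

Lemma sum_widen (a b : nat) (f : nat -> int) : (a <= b)%N ->
  (forall l, (a <= l)%N -> (l < b)%N -> f l = 0) ->
  \sum_(l < b) f l = \sum_(l < a) f l.
Proof.
move=> hab h.
rewrite -!(big_mkord xpredT) (big_cat_nat (leq0n a) hab) /=.
rewrite [X in _ + X]big_nat_cond [X in _ + X]big1 ?addr0 // => i /andP[/andP[h1 h2] _].
exact: h.
Qed.

Lemma swap_sum (A B : imat) (x : nat -> int) n : lower_tri B ->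
  \sum_(m < n.+1) A n m * \sum_(l < m.+1) B m l * x l
  = \sum_(l < n.+1) imat_mul A B n l * x l.
Proof.
move=> hB.
have -> : \sum_(m < n.+1) A n m * \sum_(l < m.+1) B m l * x l
   = \sum_(m < n.+1) \sum_(l < n.+1) A n m * (B m l * x l).
  apply: eq_bigr => m _; rewrite mulr_sumr.
  rewrite (@sum_widen m.+1 n.+1 (fun l => A n m * (B m l * x l))) ?ltn_ord // => l h1 h2.
  by rewrite hB // mul0r mulr0.
rewrite exchange_big /=; apply: eq_bigr => l _.
by rewrite /imat_mul mulr_suml; apply: eq_bigr => m _; rewrite mulrA.
Qed.

Definition prev (A : imat) : imat := fun m n => if m is m'.+1 then A m' n else 0.

Lemma rec_of_inv (M Fi : imat) :
  lower_tri M -> lower_tri Fi -> imat_mul Fi M = imat_id -> imat_mul M Fi = imat_id ->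
  (forall m n, M m n.+1 = prev M m n + prev (prev M) m n) ->
  forall n j, Fi n j.+2 = prev Fi n j - Fi n j.+1.
Proof.
move=> hM hF hFM hMF hs n j.
pose X l := Fi l j.+2 + Fi l j.+1 - prev Fi l j.
suff : X n = 0 by rewrite /X => H; apply/eqP; rewrite -subr_eq0 -H; apply/eqP; ring.
have HY : forall m, \sum_(l < m.+1) M m l * X l = 0.
  move=> m.
  have E1 : \sum_(l < m.+1) M m l * X l = imat_mul M Fi m j.+2 + imat_mul M Fi m j.+1
      - \sum_(l < m.+1) M m l * prev Fi l j.
    rewrite /X /imat_mul -big_split -sumrB /=; apply: eq_bigr => l _; ring.
  rewrite {}E1 !hMF /imat_id big_ord_recl /= mulr0 add0r.
  under eq_bigr => l _ do rewrite hs.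
  case: m => [|m]; first by rewrite big_ord0 /=; ring.
  rewrite /=.
  have E2 : \sum_(i < m.+1) (M m i + prev M m i) * Fi i j
       = imat_mul M Fi m j + \sum_(i < m.+1) prev M m i * Fi i j.
    by rewrite /imat_mul -big_split /=; apply: eq_bigr => i _; ring.
  rewrite {}E2 hMF /imat_id.
  case: m => [|m].
    by rewrite big_ord1 /= mul0r eqSS addr0 add0r subrr.
  rewrite /= big_ord_recr /= (hM m m.+1) // mul0r addr0.
  have := hMF; move=> /(congr1 (fun A => A m j)); rewrite /imat_mul => ->; rewrite /imat_id !eqSS; ring.
have -> : X n = \sum_(m < n.+1) Fi n m * \sum_(l < m.+1) M m l * X l.
  rewrite swap_sum // hFM /imat_id.
  under eq_bigr => l _ do rewrite eq_sym mulrC.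
  by rewrite sum_delta ltnSn.
by rewrite big1 // => m _; rewrite HY mulr0.
Qed.
Lemma coefNX j k : ((- 'X : {poly int}) ^+ j)`_k = (-1) ^+ j * (k == j)%:R.
Proof.
elim: j k => [|j IH] k; first by rewrite expr0 coef1 expr0 mul1r.
rewrite exprSr mulrN coefN coefMX; case: k => [|k] /=; first by rewrite mulr0 oppr0.
by rewrite IH exprS; ring.
Qed.

Lemma D_entry k j : D_mat k j = (-1) ^+ j * (k == j)%:R.
Proof. by rewrite /D_mat /riordan mul1r coefNX. Qed.

Lemma conjD (A : imat) n j : lower_tri A ->
  imat_mul (imat_mul D_mat A) D_mat n j = (-1) ^+ n * A n j * (-1) ^+ j.
Proof.
move=> hA.
have H1 : forall k, imat_mul D_mat A n k = (-1) ^+ n * A n k.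
  move=> k; rewrite /imat_mul.
  under eq_bigr => i _ do rewrite D_entry eq_sym mulrAC mulrC.
  rewrite (eq_bigr (fun i : 'I_n.+1 => ((-1) ^+ i * A i k) * (nat_of_ord i == n)%:R)).
    by rewrite (sum_delta n.+1 n (fun i => (-1) ^+ i * A i k)) ltnSn.
  by move=> i _; ring.
rewrite /imat_mul.
under eq_bigr => i _ do rewrite D_entry.
rewrite (eq_bigr (fun i : 'I_n.+1 => ((-1) ^+ n * A n i * (-1) ^+ j) * (nat_of_ord i == j)%:R)).
  rewrite (sum_delta n.+1 j (fun i => (-1) ^+ n * A n i * (-1) ^+ j)); case: ltnP => // h.
  by rewrite hA // mulr0 mul0r.
by move=> i _; rewrite -H1 /imat_mul; ring.
Qed.

Lemma riordan_lt (g : {poly int}) m j : (m < j)%N -> riordan g ('X * (1 + 'X)) m j = 0.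
Proof.
by move=> h; rewrite /riordan exprMn mulrCA coefXnM h.
Qed.


Lemma riordan_shift (g : {poly int}) m n :
  riordan g ('X * (1 + 'X)) m n.+1 =
  prev (riordan g ('X * (1 + 'X))) m n + prev (prev (riordan g ('X * (1 + 'X)))) m n.
Proof.
rewrite /riordan exprSr mulrA.
set p := g * _ ^+ n.
have -> : p * ('X * (1 + 'X)) = p * 'X + p * 'X * 'X by ring.
rewrite coefD !coefMX.
case: m => [|[|m]] //=; by rewrite ?coefMX //= ?addr0.
Qed.

Lemma uniq_rec (A B : imat) (c : nat -> int) (al : int) :
  lower_tri A -> lower_tri B ->
  (forall n j, A n.+1 j.+1 = A n j + A n.+1 j.+2) ->
  (forall n j, B n.+1 j.+1 = B n j + B n.+1 j.+2) ->
  (forall n, A n 0%N = c n + al * A n 1%N) ->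
  (forall n, B n 0%N = c n + al * B n 1%N) ->
  forall n j, A n j = B n j.
Proof.
move=> hA hB rA rB cA cB.
have pos : forall n, (forall j, A n j.+1 = B n j.+1) -> forall j, A n j = B n j.
  by move=> n H [|j]; [rewrite cA cB H|exact: H].
elim=> [|n IH].
  by apply: pos => j; rewrite hA // hB.
apply: pos.
have key : forall d j, (j + d = n.+2)%N -> A n.+1 j = B n.+1 j.
  elim=> [|d IHd] j hj.
    by rewrite hA ?hB //; lia.
  case: j hj => [|j] hj; first by rewrite cA cB (IHd 1%N) //; lia.
  rewrite rA rB IH (IHd j.+2) //; lia.
move=> j; case: (leqP j.+1 n.+2) => h.
  by apply: (key (n.+2 - j.+1)%N); lia.
rewrite hA ?hB //; lia.
Qed.

Definition Qc : imat := fun n j => if (j <= n)%N then ('C(n.*2 - j, n - j))%:R else 0.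

Lemma Qc_lt : lower_tri Qc.
Proof. by move=> n j h; rewrite /Qc leqNgt h. Qed.

Lemma Qc_rec n j : Qc n.+1 j.+1 = Qc n j + Qc n.+1 j.+2.
Proof.
rewrite /Qc !ltnS; case: (ltngtP j n) => h.
- idtac.
  have -> : (n.+1.*2 - j.+1 = (n.*2 - j).+1)%N by lia.
  have -> : (n.+1 - j.+1 = (n - j.+1).+1)%N by lia.
  have -> : (n - j = (n - j.+1).+1)%N by lia.
  have -> : (n.+1.*2 - j.+2 = n.*2 - j)%N by lia.
  have -> : (n.+1 - j.+2 = n - j.+1)%N by lia.
  by rewrite binS natrD.
- by rewrite addr0.
- by rewrite h subSS !subnn !bin0 addr0.
Qed.

Lemma Qc_col0 n : Qc n 0%N = (n == 0%N)%:R + 2 * Qc n 1%N.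
Proof.
case: n => [|m]; first by rewrite /Qc /= mulr0 addr0.
rewrite /Qc /= !subn0 subn1 /= add0r.
have -> : (m.+1.*2 = (m.*2.+1).+1)%N by lia.
rewrite binS.
have -> : 'C(m.*2.+1, m.+1) = 'C(m.*2.+1, m).
  rewrite -bin_sub; last by lia.
  by congr 'C(_, _); lia.
by rewrite subn1 /= natrD -mulr2n mulr_natl.
Qed.

Definition Bc : imat := fun n j => Qc n j - 2 * Qc n j.+1.

Lemma Bc_lt : lower_tri Bc.
Proof. by move=> n j h; rewrite /Bc /Qc leqNgt h leqNgt ltnW // mulr0 subr0. Qed.

Lemma Bc_rec n j : Bc n.+1 j.+1 = Bc n j + Bc n.+1 j.+2.
Proof. rewrite /Bc (Qc_rec n j) (Qc_rec n j.+1); ring. Qed.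

Lemma Bc_col0 n : Bc n 0%N = (n == 0%N)%:R + 0 * Bc n 1%N.
Proof. rewrite /Bc Qc_col0; ring. Qed.

Lemma key_bin m : (m.+1 * 'C(m.*2, m.+1) = m * 'C(m.*2, m))%N.
Proof. by rewrite mul_bin_left; congr (_ * _)%N; lia. Qed.

Lemma catZ m : catalan m = ('C(m.*2, m))%:R - ('C(m.*2, m.+1))%:R.
Proof.
have hk := key_bin m.
set b := 'C(m.*2, m) in hk *; set c := 'C(m.*2, m.+1) in hk *.
have hcb : (c <= b)%N.
  rewrite -(@leq_pmul2l m.+1) // hk; exact: leq_mul.
have hb : b = (m.+1 * (b - c))%N by rewrite mulnBr hk mulSn addnK.
by rewrite /catalan -/b {1}hb mulKn // !natz subzn.
Qed.

Lemma catS m : (m.+1)%:R * catalan m = ('C(m.*2, m))%:R :> int.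
Proof.
have hk := key_bin m.
have hk' : (m.+1)%:R * ('C(m.*2, m.+1))%:R = m%:R * ('C(m.*2, m))%:R :> int
  by rewrite -!natrM hk.
rewrite catZ mulrBr hk' -{1}(addn1 m) natrD; ring.
Qed.

Lemma Qc0 n : Qc n 0%N = ('C(n.*2, n))%:R.
Proof. by rewrite /Qc /= !subn0. Qed.

Lemma Qc1 m : Qc m.+1 1%N = ('C(m.*2, m))%:R + ('C(m.*2, m.+1))%:R.
Proof.
rewrite /Qc /=.
have -> : (m.+1.*2 - 1 = m.*2.+1)%N by lia.
rewrite subn1 /=.
have -> : 'C(m.*2.+1, m) = 'C(m.*2.+1, m.+1).
  rewrite -[in RHS]bin_sub; last by lia.
  by congr 'C(_, _); lia.
by rewrite binS natrD addrC.
Qed.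

Lemma Qc2 m : Qc m.+1 2%N = ('C(m.*2, m.+1))%:R.
Proof.
case: m => [|p]; first by rewrite /Qc /=.
rewrite /Qc /=.
rewrite -[in RHS]bin_sub; last by lia.
by congr ('C(_, _))%:R; lia.
Qed.

Lemma Bc1 m : Bc m.+1 1%N = catalan m.
Proof. rewrite /Bc Qc1 Qc2 catZ; ring. Qed.

Lemma Qc1' m : Qc m.+1 1%N = (m.*2.+1)%:R * catalan m.
Proof.
have hk := key_bin m.
have hk' : (m.+1)%:R * ('C(m.*2, m.+1))%:R = m%:R * ('C(m.*2, m))%:R :> int
  by rewrite -!natrM hk.
rewrite Qc1 catZ -{1}(addn1 m) natrD in hk' *.
have -> : (m.*2.+1)%:R = m%:R + m%:R + 1 :> int by rewrite -addnn -addn1 !natrD.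
apply/eqP; rewrite -subr_eq0; apply/eqP.
set b := ('C(m.*2, m))%:R in hk' *; set c := ('C(m.*2, m.+1))%:R in hk' *.
have -> : b + c - (m%:R + m%:R + 1) * (b - c) = 2 * ((m%:R + 1) * c - m%:R * b) by ring.
by rewrite hk' subrr mulr0.
Qed.
Definition TE (w : nat -> nat -> nat -> int) (c : nat -> int) (n j : nat) : int :=
  \sum_(k < j) (-1) ^+ k * w n j k * c (n - 1 - k)%N.

Lemma TE_rec w c n j : (0 < j)%N -> w n j.+1 0%N = w n j 0%N ->
  (forall k, w n j.+1 k.+1 = w n j k.+1 + w n.-1 j.-1 k) ->
  w n j j = 0 -> w n.-1 j.-1 j.-1 = 0 ->
  TE w c n j.+1 = TE w c n j - TE w c n.-1 j.-1.
Proof.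
case: j => [|j] // _ h0 hS hjj /= hjj'.
rewrite /TE big_ord_recl /=.
under eq_bigr => k _ do rewrite hS.
have E1 : \sum_(i < j.+1) (-1) ^+ bump 0 i * (w n j.+1 (bump 0 i) + w n.-1 j i) *
      c (n - 1 - bump 0 i)%N
   = \sum_(i < j.+1) (-1) ^+ i.+1 * w n j.+1 i.+1 * c (n - 1 - i.+1)%N
     - \sum_(i < j.+1) (-1) ^+ i * w n.-1 j i * c (n.-1 - 1 - i)%N.
  rewrite -sumrB; apply: eq_bigr => i _.
  have -> : (n.-1 - 1 - i = n - 1 - i.+1)%N by lia.
  rewrite /bump /= add1n exprS; ring.
rewrite E1 [X in _ = X - _]big_ord_recl /= addrA; congr (_ + _ - _).
- by rewrite h0.
- rewrite big_ord_recr /= hjj mulr0 mul0r addr0.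
  by apply: eq_bigr => i _; rewrite /bump /= add1n.
- by rewrite big_ord_recr /= hjj' mulr0 mul0r addr0.
Qed.

Lemma off_TE w n j : (0 < j)%N ->
  (forall k, ((j - 1)./2 < k)%N -> (k < j)%N -> w n j k = 0) ->
  \sum_(k < (j - 1)./2.+1) (-1) ^+ k * w n j k * catalan (n - 1 - k)
  = TE w catalan n j.
Proof.
move=> hj hv; rewrite /TE.
rewrite (@sum_widen ((j - 1)./2.+1) j (fun k => (-1) ^+ k * w n j k * catalan (n - 1 - k))) //.
  lia.
by move=> l h1 h2; rewrite hv ?mulr0 ?mul0r.
Qed.

Lemma ind2 (f g : nat -> nat -> int) j0 :
  (forall n, (j0 <= n)%N -> f n j0 = g n j0) ->
  (forall n, (j0.+1 <= n)%N -> f n j0.+1 = g n j0.+1) ->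
  (forall n j, (j0.+1 <= j)%N -> (j.+1 <= n)%N -> f n j.+1 = f n j - f n.-1 j.-1) ->
  (forall n j, (j0.+1 <= j)%N -> (j.+1 <= n)%N -> g n j.+1 = g n j - g n.-1 j.-1) ->
  forall n j, (j0 <= j)%N -> (j <= n)%N -> f n j = g n j.
Proof.
move=> b0 b1 rf rg.
have H : forall i, (forall n, (j0 + i <= n)%N -> f n (j0 + i)%N = g n (j0 + i)%N) /\
                   (forall n, (j0 + i.+1 <= n)%N -> f n (j0 + i.+1)%N = g n (j0 + i.+1)%N).
  elim=> [|i [IH1 IH2]].
    by split => n; rewrite ?addn0 ?addn1; [apply: b0 | apply: b1].
  split => // n hn.
  have -> : (j0 + i.+2 = (j0 + i.+1).+1)%N by lia.
  rewrite rf ?rg; try lia.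
  rewrite IH2; last by lia.
  have -> : ((j0 + i.+1).-1 = j0 + i)%N by lia.
  by rewrite IH1 //; lia.
move=> n j h1 h2.
have := (H (j - j0)%N).1 n.
have -> : (j0 + (j - j0) = j)%N by lia.
by apply.
Qed.

Definition wR (n j k : nat) : int := ('C(j - 1 - k, k))%:R.
Definition wQ (n j k : nat) : int :=
  ((n - 1 - k)%N)%:R * (('C(j - 1 - k, k))%:R + (binom_pred (j - 2 - k) k)%:R)
  + (binom_pred (j - 2 - k) k)%:R.

Lemma wR_van n j k : ((j - 1)./2 < k)%N -> wR n j k = 0.
Proof. by move=> h; rewrite /wR bin_small //; move: h; rewrite ltn_half_double; lia. Qed.

Lemma wQ_van n j k : (3 <= j)%N -> ((j - 1)./2 < k)%N -> wQ n j k = 0.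
Proof.
move=> hj; rewrite ltn_half_double => h.
case: k h => [|k] h; first by lia.
rewrite /wQ /= !bin_small ?mulr0 ?addr0 //; lia.
Qed.

Lemma pascal a k : (0 < a)%N -> 'C(a, k.+1) = ('C(a.-1, k.+1) + 'C(a.-1, k))%N.
Proof. by case: a => // a _; rewrite binS. Qed.

Lemma wR_rec n j k : (2 <= j)%N -> wR n j.+1 k.+1 = wR n j k.+1 + wR n.-1 j.-1 k.
Proof.
move=> hj; rewrite /wR -natrD.
case: (ltnP 0 (j.+1 - 1 - k.+1)) => h.
  rewrite pascal //; congr (('C(_, _) + 'C(_, _))%:R); lia.
have -> : (j.+1 - 1 - k.+1 = 0)%N by lia.
have -> : (j - 1 - k.+1 = 0)%N by lia.
have -> : (j.-1 - 1 - k = 0)%N by lia.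
case: k h => [|k] h; first by lia.
by rewrite !bin0n.
Qed.

Lemma wQ_alg (N a b c : int) :
  N * (a + (b + c) + (b + c)) + (b + c) = N * (a + b) + b + (N * (b + c + c) + c).
Proof. ring. Qed.

Lemma wQ_A j k : (4 <= j)%N -> 'C(j - 1 - k, k.+1) = ('C(j - 2 - k, k.+1) + 'C(j - 2 - k, k))%N.
Proof.
move=> hj.
case: (ltnP 0 (j - 1 - k)) => h.
  rewrite pascal //; congr ('C(_, _) + 'C(_, _))%N; lia.
have -> : (j - 1 - k = 0)%N by lia.
have -> : (j - 2 - k = 0)%N by lia.
case: k h => [|k] h; first by lia.
by rewrite !bin0n.
Qed.

Lemma wQ_B j k : (4 <= j)%N -> 'C(j - 2 - k, k) = ('C(j - 3 - k, k) + binom_pred (j - 3 - k) k)%N.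
Proof.
move=> hj.
case: k => [|k]; first by rewrite !bin0.
rewrite /binom_pred.
case: (ltnP 0 (j - 2 - k.+1)) => h.
  rewrite pascal //; congr ('C(_, _) + 'C(_, _))%N; lia.
have -> : (j - 2 - k.+1 = 0)%N by lia.
have -> : (j - 3 - k.+1 = 0)%N by lia.
case: k h => [|k] h; first by lia.
by rewrite !bin0n.
Qed.

Lemma wQ_rec n j k : (4 <= j)%N -> wQ n j.+1 k.+1 = wQ n j k.+1 + wQ n.-1 j.-1 k.
Proof.
move=> hj.
have A := wQ_A j k hj.
have B := wQ_B j k hj.
case: j hj A B => [|j] // hj A B.
rewrite /wQ /=.
have e1 : (j.+2 - 1 - k.+1 = j.+1 - 1 - k)%N by rewrite -!subnDA !addnS.
have e2 : (j.+2 - 2 - k.+1 = j.+1 - 2 - k)%N by rewrite -!subnDA !addnS.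
have e3 : (j.+1 - 1 - k.+1 = j.+1 - 2 - k)%N by rewrite -!subnDA !addnS.
have e4 : (j.+1 - 2 - k.+1 = j.+1 - 3 - k)%N by rewrite -!subnDA !addnS.
have e5 : (j - 1 - k = j.+1 - 2 - k)%N by rewrite -!subnDA.
have e6 : (j - 2 - k = j.+1 - 3 - k)%N by rewrite -!subnDA.
have e7 : (n.-1 - 1 - k = n - 1 - k.+1)%N.
  by case: n => [|n] //=; rewrite -!subnDA ?sub0n // !addnS.
rewrite ?e1 ?e2 ?e3 ?e4 ?e5 ?e6 ?e7 A B !natrD; exact: wQ_alg.
Qed.
Definition gR n j := \sum_(k < (j - 1)./2.+1) (-1) ^+ k * wR n j k * catalan (n - 1 - k).
Definition gQ n j := \sum_(k < (j - 1)./2.+1) (-1) ^+ k * wQ n j k * catalan (n - 1 - k).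

Lemma Bc2 m : (1 <= m)%N -> Bc m.+1 2%N = catalan m.
Proof.
move=> hm; have := Bc_rec m 0%N; rewrite Bc1 Bc_col0.
case: m hm => [|m] // _ /= ->; ring.
Qed.

Lemma gR_rec n j : (2 <= j)%N -> gR n j.+1 = gR n j - gR n.-1 j.-1.
Proof.
move=> hj; rewrite /gR !off_TE; try lia; try (by move=> *; apply: wR_van).
apply: TE_rec; try lia.
- by rewrite /wR !bin0.
- by move=> k; apply: wR_rec.
- by apply: wR_van; lia.
- by apply: wR_van; lia.
Qed.

Lemma partA n j : (1 <= j)%N -> (j <= n)%N -> Bc n j = gR n j.
Proof.
apply: (@ind2 Bc gR 1%N).
- case=> [|m] // _; rewrite Bc1 /gR big_ord1 /= subn0 subn1 /= /wR /=; by rewrite bin0 expr0 !mul1r.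
- case=> [|[|m]] // _; rewrite Bc2 // /gR big_ord1 /= subn0 subn1 /= /wR /=; by rewrite bin0 expr0 !mul1r.
- move=> [|n'] [|j'] // hj hn /=; rewrite (Bc_rec n' j'); ring.
- by move=> n' j' hj _; apply: gR_rec.
Qed.

Lemma Qc2' m : Qc m.+1 2%N = m%:R * catalan m.
Proof.
have := Qc_rec m 0%N; rewrite Qc1' Qc0 -catS => /eqP.
rewrite addrC -subr_eq => /eqP <-.
have -> : (m.*2.+1)%:R = m%:R + m%:R + 1 :> int by rewrite -addnn -addn1 !natrD.
rewrite -addn1 natrD; ring.
Qed.

Lemma Qc3 p : Qc p.+2 3%N = (p.+1)%:R * catalan p.+1 - (p.*2.+1)%:R * catalan p.
Proof.
have := Qc_rec p.+1 1%N; rewrite Qc2' Qc1' => /eqP.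
rewrite addrC -subr_eq => /eqP <-; ring.
Qed.

Lemma Qc4 p : Qc p.+2 4%N = (p.+1)%:R * catalan p.+1 - (p.*2.+1)%:R * catalan p - p%:R * catalan p.
Proof.
have := Qc_rec p.+1 2%N; rewrite Qc2' Qc3 => /eqP.
rewrite addrC -subr_eq => /eqP <-; ring.
Qed.

Lemma gQ_rec n j : (4 <= j)%N -> gQ n j.+1 = gQ n j - gQ n.-1 j.-1.
Proof.
move=> hj; rewrite /gQ !off_TE; try lia; try (by move=> *; apply: wQ_van; lia).
apply: TE_rec; try lia.
- by rewrite /wQ !bin0 /=.
- by move=> k; apply: wQ_rec.
- by apply: wQ_van; lia.
- by apply: wQ_van; lia.
Qed.

Lemma partB n j : (3 <= j)%N -> (j <= n)%N -> Qc n j = gQ n j.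
Proof.
apply: (@ind2 Qc gQ 3%N).
- case=> [|[|p]] // hp; rewrite Qc3 /gQ big_ord_recr big_ord1 /= /wQ /=.
  have -> : (p.+2 - 1 - 0 = p.+1)%N by lia.
  have -> : (p.+2 - 1 - 1 = p)%N by lia.
  have -> : (p.*2.+1)%:R = p%:R + p%:R + 1 :> int by rewrite -addnn -addn1 !natrD.
  rewrite !bin0 bin1 (_ : (3 - 1 - 1 = 1)%N) //; rewrite -[in p.+1]addn1 natrD; ring.
- case=> [|[|p]] // hp; rewrite Qc4 /gQ big_ord_recr big_ord1 /= /wQ /=.
  have -> : (p.+2 - 1 - 0 = p.+1)%N by lia.
  have -> : (p.+2 - 1 - 1 = p)%N by lia.
  have -> : (p.*2.+1)%:R = p%:R + p%:R + 1 :> int by rewrite -addnn -addn1 !natrD.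
  rewrite !bin0 bin1 (_ : (4 - 1 - 1 = 2)%N) //; rewrite -[in p.+1]addn1 natrD; ring.
- move=> [|n'] [|j'] // hj hn /=; rewrite (Qc_rec n' j'); ring.
- by move=> n' j' hj _; apply: gQ_rec.
Qed.

Lemma partB2 m : (1 <= m)%N -> Qc m.+1 2%N = gQ m.+1 2%N.
Proof.
move=> hm; rewrite Qc2' /gQ big_ord1 /= /wQ /=.
have -> : (m.+1 - 1 - 0 = m)%N by lia.
rewrite bin0 /=; ring.
Qed.
Theorem theorem3p5 (Finv Linv : imat) :
  lower_tri Finv -> imat_mul Finv FS = imat_id -> imat_mul FS Finv = imat_id ->
  lower_tri Linv -> imat_mul Linv LS = imat_id -> imat_mul LS Linv = imat_id ->
  let r := imat_mul (imat_mul D_mat Finv) D_mat in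
  let q := imat_mul (imat_mul D_mat Linv) D_mat in
  ((forall n, r n 0%N = catalan 0 * (n == 0%N)%:R) /\
   (forall n j, (1 <= j)%N ->
      r n j = if (j <= n)%N then
                \sum_(k < (j - 1)./2.+1)
                   (-1) ^+ k * ('C(j - 1 - k, k))%:R * catalan (n - 1 - k)
              else 0)) /\
  ((forall n, q n 0%N = (n.+1)%:R * catalan n) /\
   (forall n, (1 <= n)%N -> q n 1%N = ((2 * n - 1)%N)%:R * catalan (n - 1)) /\
   (forall n j, (2 <= j)%N -> (j <= n)%N ->
      q n j = \sum_(k < (j - 1)./2.+1)
                (-1) ^+ k *
                (((n - 1 - k)%N)%:R *
                   (('C(j - 1 - k, k))%:R + (binom_pred (j - 2 - k) k)%:R)
                 + (binom_pred (j - 2 - k) k)%:R)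
                * catalan (n - 1 - k))).
Proof.
move=> hFl hFM hMF hLl hLM hML r q.
have FSl : lower_tri FS by move=> m j h; exact: riordan_lt.
have LSl : lower_tri LS by move=> m j h; exact: riordan_lt.
have recF := @rec_of_inv FS Finv FSl hFl hFM hMF (riordan_shift 1).
have recL := @rec_of_inv LS Linv LSl hLl hLM hML (riordan_shift (1 + 2%:R *: 'X)).
pose rF : imat := fun n j => (-1) ^+ n * Finv n j * (-1) ^+ j.
pose qF : imat := fun n j => (-1) ^+ n * Linv n j * (-1) ^+ j.
have Er : forall n j, r n j = rF n j by move=> n j; rewrite /r conjD.
have Eq : forall n j, q n j = qF n j by move=> n j; rewrite /q conjD.
have rFl : lower_tri rF by move=> n j h; rewrite /rF hFl // mulr0 mul0r.
have qFl : lower_tri qF by move=> n j h; rewrite /qF hLl // mulr0 mul0r.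
have rFrec : forall n j, rF n.+1 j.+1 = rF n j + rF n.+1 j.+2.
  move=> n j; rewrite /rF.
  have -> : Finv n.+1 j.+1 = Finv n j - Finv n.+1 j.+2 by rewrite recF /=; ring.
  rewrite !exprS; ring.
have qFrec : forall n j, qF n.+1 j.+1 = qF n j + qF n.+1 j.+2.
  move=> n j; rewrite /qF.
  have -> : Linv n.+1 j.+1 = Linv n j - Linv n.+1 j.+2 by rewrite recL /=; ring.
  rewrite !exprS; ring.
have F0 : forall n, Finv n 0%N = (n == 0%N)%:R.
  move=> n; have := congr1 (fun A => A n 0%N) hFM; rewrite /imat_mul /imat_id /= => <-.
  under eq_bigr => k _ do rewrite /FS /riordan expr0 mulr1 coef1.
  by rewrite (sum_delta n.+1 0 (fun k => Finv n k)).
have L0 : forall n, Linv n 0%N + 2 * Linv n 1%N = (n == 0%N)%:R.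
  move=> n; have := congr1 (fun A => A n 0%N) hLM; rewrite /imat_mul /imat_id /= => <-.
  under eq_bigr => k _ do rewrite /LS /riordan expr0 mulr1 coefD coef1 coefZ coefX mulrDr mulrA.
  rewrite big_split /= (sum_delta n.+1 0 (fun k => Linv n k)) (sum_delta n.+1 1 (fun k => Linv n k * 2%:R)) /=.
  case: n => [|n] /=; last by ring.
  rewrite (hLl 0%N 1%N) //; ring.
have rF0 : forall n, rF n 0%N = (n == 0%N)%:R + 0 * rF n 1%N.
  by move=> n; rewrite /rF F0 mul0r addr0; case: n => [|n] /=; rewrite ?expr0 ?mulr1 ?mulr0 ?mul0r.
have qF0 : forall n, qF n 0%N = (n == 0%N)%:R + 2 * qF n 1%N.
  move=> n; rewrite /qF.
  have -> : Linv n 0%N = (n == 0%N)%:R - 2 * Linv n 1%N by rewrite -(L0 n); ring.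
  case: n => [|n] /=; rewrite ?exprS ?expr0; ring.
have rB : forall n j, rF n j = Bc n j :=
  @uniq_rec rF Bc _ _ rFl Bc_lt rFrec Bc_rec rF0 Bc_col0.
have qQ : forall n j, qF n j = Qc n j.
  apply: (@uniq_rec qF Qc _ _ qFl Qc_lt qFrec Qc_rec qF0); exact: Qc_col0.
split; [split|split; [|split]].
- by move=> n; rewrite Er rB Bc_col0 mul0r addr0 mul1r.
- move=> n j hj; rewrite Er rB; case: ifP => h; last by rewrite Bc_lt //; lia.
  exact: partA.
- by move=> n; rewrite Eq qQ Qc0 catS.
- move=> [|m] // _; rewrite Eq qQ Qc1'.
  have -> : (2 * m.+1 - 1 = m.*2.+1)%N by lia.
  by rewrite subn1.
- move=> n j hj hn; rewrite Eq qQ.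
  case: (ltngtP j 2) => hj2; first by lia.
    exact: partB.
  subst j; case: n hn => [|[|m]] // hn.
  exact: partB2.
Qed.
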